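(* Let $N\ge 2$, $x_0<x_1<\dots<x_N$, $I=[x_0,x_N]$, $I_i=[x_{i-1},x_i)$ for $i<N$, $I_N=[x_{N-1},x_N]$. For $i=1,\dots,N$ let $L_i(x)=a_ix+b_i$ with $a_i=\frac{x_i-x_{i-1}}{x_N-x_0}$, $b_i=\frac{x_Nx_{i-1}-x_0x_i}{x_N-x_0}$, let $\alpha_i\in(-1,1)$, and let $q_i:I\to\mathbb{R}$ be Lipschitz continuous. Let $f$ be the unique bounded function on $I$ with $f(x)=\alpha_if(L_i^{-1}(x))+q_i(L_i^{-1}(x))$ for $x\in I_i$, $i=1,\dots,N$. Then the set of points of discontinuity of $f$ has Lebesgue measure zero; in particular $f$ is Riemann integrable on $I$. *)

(* Defs.v *)
From Stdlib Require Import Reals.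
From mathcomp Require Import all_boot all_order all_algebra.
From mathcomp Require Import all_classical all_reals all_analysis.
From mathcomp Require Import Rstruct Rstruct_topology.

Set Implicit Arguments. Unset Strict Implicit. Unset Printing Implicit Defensive.

Local Open Scope R_scope.

Definition Iint (x : nat -> R) (N : nat) (t : R) : Prop := x 0%nat <= t <= x N.

Definition Iseg (x : nat -> R) (N i : nat) (t : R) : Prop :=
  if (i < N)%N then x (i.-1) <= t < x i else x (i.-1) <= t <= x i.

Definition a_coef (x : nat -> R) (N i : nat) : R :=
  (x i - x (i.-1)) / (x N - x 0%nat).
Definition b_coef (x : nat -> R) (N i : nat) : R :=
  (x N * x (i.-1) - x 0%nat * x i) / (x N - x 0%nat).
Definition Lmap (x : nat -> R) (N i : nat) (t : R) : R :=
  a_coef x N i * t + b_coef x N i.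
Definition Linv (x : nat -> R) (N i : nat) (t : R) : R :=
  (t - b_coef x N i) / a_coef x N i.

Definition lipschitz_on_set (A : R -> Prop) (g : R -> R) : Prop :=
  exists K : R, forall s t, A s -> A t -> Rabs (g s - g t) <= K * Rabs (s - t).

Definition continuous_within_at (A : R -> Prop) (g : R -> R) (t : R) : Prop :=
  forall eps, 0 < eps -> exists delta, 0 < delta /\
    forall s, A s -> Rabs (s - t) < delta -> Rabs (g s - g t) < eps.

Definition discont_set (A : R -> Prop) (g : R -> R) : set R :=
  [set t | A t /\ ~ continuous_within_at A g t].

(* Main.v *)
Require Import Defs.
From Stdlib Require Import Reals.
From mathcomp Require Import all_boot all_order all_algebra.
From mathcomp Require Import all_classical all_reals all_analysis.
From mathcomp Require Import Rstruct Rstruct_topology.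
From Stdlib Require Import Lra Lia ClassicalEpsilon Classical_Prop.
From mathcomp Require Import zify.

Local Open Scope R_scope.

Lemma cid_T (A : Type) (P : A -> Prop) : (exists x, P x) -> {x | P x}.
Proof. apply constructive_indefinite_description. Qed.
Arguments cid_T {A P}.

Lemma int_approx (f : R -> R) (a b : R) :
  (forall eps, 0 < eps -> exists (g : R -> R) (h : StepFun a b),
     inhabited (Riemann_integrable g a b) /\
     (forall t, Rmin a b <= t <= Rmax a b -> Rabs (f t - g t) <= h t) /\
     Rabs (RiemannInt_SF h) < eps) ->
  Riemann_integrable f a b.
Proof.
intros H [e he].
assert (he2 : 0 < e / 2) by lra.
destruct (cid_T (H _ he2)) as [g Hg].
destruct (cid_T Hg) as [h [Hi [Hb Hh]]].
assert (X : Riemann_integrable g a b).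
{ assert (E : exists X : Riemann_integrable g a b, True) by (destruct Hi as [X]; exists X; exact I).
  destruct (cid_T E) as [X _]; exact X. }
destruct (X (mkposreal _ he2)) as [phi [psi [H1 H2]]].
exists phi. exists (mkStepFun (StepFun_P28 1 h psi)). split.
- intros t Ht. simpl.
  specialize (H1 t Ht). specialize (Hb t Ht).
  replace (f t - phi t) with ((f t - g t) + (g t - phi t)) by ring.
  eapply Rle_trans; [apply Rabs_triang|]. rewrite Rmult_1_l; apply Rplus_le_compat; assumption.
- rewrite StepFun_P30. cbv [pos] in H2.
  eapply Rle_lt_trans; [apply Rabs_triang|]. rewrite Rmult_1_l. simpl pos. lra.
Qed.

Definition clamp (c d t : R) := Rmax c (Rmin d t).

Lemma clamp_in c d t : c <= d -> c <= clamp c d t <= d.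
Proof. intros. unfold clamp, Rmax, Rmin. repeat destruct Rle_dec; lra. Qed.

Lemma clamp_lip c d s t : c <= d -> Rabs (clamp c d s - clamp c d t) <= Rabs (s - t).
Proof. intros. unfold clamp, Rmax, Rmin.
repeat destruct Rle_dec; unfold Rabs; repeat destruct Rcase_abs; lra. Qed.

Lemma clamp_id c d t : c <= t <= d -> clamp c d t = t.
Proof. intros. unfold clamp, Rmax, Rmin. repeat destruct Rle_dec; lra. Qed.

Lemma cont_clamp (g : R -> R) (a b c d : R) (y : R) :
  a <= c -> c <= d -> d <= b ->
  (forall t, c <= t <= d -> continuous_within_at (fun s => a <= s <= b) g t) ->
  continuity_pt (fun t => g (clamp c d t)) y.
Proof.
intros hac hcd hdb Hc.
unfold continuity_pt, continue_in, limit1_in, limit_in. simpl. unfold R_dist.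
intros eps heps.
destruct (Hc (clamp c d y) (clamp_in _ _ y hcd) eps heps) as [del [hdel Hd]].
exists del. split; [exact hdel|]. intros z [_ hz].
apply Hd.
- pose proof (clamp_in _ _ z hcd). lra.
- eapply Rle_lt_trans; [apply clamp_lip; exact hcd| exact hz].
Qed.

Definition stepfn2 (M c d : R) (t : R) : R :=
  if Rle_dec t c then 2 * M else if Rle_dec d t then 2 * M else 0.

Lemma stepfn2_SF (M a b c d : R) : a <= c -> c <= d -> d <= b ->
  IsStepFun (stepfn2 M c d) a b.
Proof.
intros hac hcd hdb.
exists (cons a (cons c (cons d (cons b nil)))).
exists (cons (2*M) (cons 0 (cons (2*M) nil))).
unfold adapted_couple. repeat split.
- intros i hi. simpl in hi.
  destruct i as [|[|[|i]]]; simpl; lra || (exfalso; Lia.lia).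
- simpl. rewrite Rmin_left; lra.
- simpl. rewrite Rmax_right; lra.
- intros i hi. simpl in hi.
  destruct i as [|[|[|i]]]; simpl; unfold constant_D_eq, open_interval, stepfn2;
    intros t ht; try (exfalso; Lia.lia);
    repeat destruct Rle_dec; simpl; lra.
Defined.

Lemma int_interior (g : R -> R) (a b M : R) : a <= b ->
  (forall t, a <= t <= b -> Rabs (g t) <= M) ->
  (forall t, a < t < b -> continuous_within_at (fun s => a <= s <= b) g t) ->
  Riemann_integrable g a b.
Proof.
intros hab hM Hc.
destruct (Rle_lt_or_eq_dec _ _ hab) as [hlt|heq]; [|subst; apply RiemannInt_P7].
assert (M0 : 0 <= M) by (eapply Rle_trans; [apply Rabs_pos| apply (hM a); lra]).
apply int_approx. intros eps heps.
set (del := Rmin ((b - a)/2) (eps / (8*M+8))).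
assert (hd1 : del <= (b-a)/2) by apply Rmin_l.
assert (hd2 : del <= eps / (8*M+8)) by apply Rmin_r.
assert (hd0 : 0 < del).
{ unfold del, Rmin. destruct Rle_dec; [lra|]. apply Rdiv_lt_0_compat; lra. }
assert (hd3 : del * (8*M+8) <= eps).
{ apply Rmult_le_reg_r with (/ (8*M+8)). apply Rinv_0_lt_compat; lra.
  rewrite Rmult_assoc Rinv_r; lra. }
set (c := a + del). set (d := b - del).
assert (hac : a <= c) by (unfold c; lra).
assert (hcd : c <= d) by (unfold c, d; lra).
assert (hdb : d <= b) by (unfold d; lra).
exists (fun t => g (clamp c d t)).
exists (mkStepFun (stepfn2_SF M a b c d hac hcd hdb)).
split; [|split].
- constructor. apply continuity_implies_RiemannInt; [exact hab|].
  intros y _. apply cont_clamp with a b; try assumption.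
  intros t ht. apply Hc. unfold c, d in ht. lra.
- intros t Ht. rewrite (Rmin_left a b) in Ht; [|lra]. rewrite (Rmax_right a b) in Ht; [|lra].
  simpl. unfold stepfn2.
  pose proof (clamp_in _ _ t hcd) as hcl.
  assert (B1 : Rabs (g t - g (clamp c d t)) <= 2 * M).
  { eapply Rle_trans; [apply Rabs_triang|]. rewrite Rabs_Ropp.
    pose proof (hM t Ht). pose proof (hM (clamp c d t) ltac:(lra)). lra. }
  destruct Rle_dec; [exact B1|]. destruct Rle_dec; [exact B1|].
  rewrite (clamp_id c d t); [|lra]. rewrite Rminus_diag Rabs_R0. simpl. lra.
- unfold RiemannInt_SF. destruct Rle_dec; [|lra]. simpl.
  rewrite Rabs_right; unfold c, d; nra.
Qed.

Lemma continuous_within_at_sub (A A' : R -> Prop) g t : (forall s, A' s -> A s) -> continuous_within_at A g t -> continuous_within_at A' g t.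
Proof.
intros HA H eps he. destruct (H eps he) as [d [hd Hd]]. exists d; split; auto.
Qed.

Lemma int_findisc (B : list R) : forall (g : R -> R) (a b M : R), a <= b ->
  (forall t, a <= t <= b -> Rabs (g t) <= M) ->
  (forall t, a < t < b -> ~ List.In t B -> continuous_within_at (fun s => a <= s <= b) g t) ->
  Riemann_integrable g a b.
Proof.
induction B as [|p B IH]; intros g a b M hab hM Hc.
- apply int_interior with M; auto.
- destruct (Rlt_dec a p) as [h1|h1]; [destruct (Rlt_dec p b) as [h2|h2]|].
  + apply RiemannInt_P24 with p.
    * apply IH with M; [lra| intros; apply hM; lra|].
      intros t ht hn. apply continuous_within_at_sub with (fun s => a <= s <= b); [intros; lra|].
      apply Hc; [lra|]. intros [E|E]; [subst; lra| tauto].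
    * apply IH with M; [lra| intros; apply hM; lra|].
      intros t ht hn. apply continuous_within_at_sub with (fun s => a <= s <= b); [intros; lra|].
      apply Hc; [lra|]. intros [E|E]; [subst; lra| tauto].
  + apply IH with M; auto. intros t ht hn. apply Hc; auto.
    intros [E|E]; [subst; lra| tauto].
  + apply IH with M; auto. intros t ht hn. apply Hc; auto.
    intros [E|E]; [subst; lra| tauto].
Qed.

Lemma lt_mul_div (c u e : R) : 0 < c -> u < e / c -> u * c < e.
Proof.
intros hc hu. replace e with ((e / c) * c); [|field; lra].
apply Rmult_lt_compat_r; assumption.
Qed.

Lemma pow_le1 (A : R) (n : nat) : 0 <= A -> A <= 1 -> A ^ n <= 1.
Proof.
intros h0 h1. induction n as [|n IH]; simpl; [lra|].
replace 1 with (1 * 1) by ring. apply Rmult_le_compat; try lra. apply pow_le; lra.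
Qed.

Section Main.
Variables (N : nat) (x : nat -> R) (alpha : nat -> R) (q : nat -> R -> R) (f : R -> R) (M : R).
Hypothesis HN : (2 <= N)%N.
Hypothesis Hx : forall i, (i < N)%N -> x i < x i.+1.
Hypothesis Ha : forall i, (1 <= i <= N)%N -> -1 < alpha i < 1.
Hypothesis Hq : forall i, (1 <= i <= N)%N -> lipschitz_on_set (Iint x N) (q i).
Hypothesis HM : forall t, Iint x N t -> Rabs (f t) <= M.
Hypothesis Hf : forall i t, (1 <= i <= N)%N -> Iseg x N i t ->
     f t = alpha i * f (Linv x N i t) + q i (Linv x N i t).

Lemma xlt i j : (i < j)%N -> (j <= N)%N -> x i < x j.
Proof.
induction j as [|j IH]; intros h1 h2; [lia|].
destruct (Nat.eq_dec i j) as [->|hne]; [apply Hx; lia|].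
apply Rlt_trans with (x j); [apply IH; lia| apply Hx; lia].
Qed.

Lemma xle i j : (i <= j)%N -> (j <= N)%N -> x i <= x j.
Proof.
intros h1 h2. destruct (Nat.eq_dec i j) as [->|hne]; [lra|].
left; apply xlt; lia.
Qed.

Lemma D_pos : 0 < x N - x 0%nat.
Proof. have := xlt 0 N. intros H. apply Rlt_0_minus. apply H; lia. Qed.

Lemma Del_pos i : (1 <= i <= N)%N -> 0 < x i - x i.-1.
Proof. intros h. apply Rlt_0_minus. apply xlt; lia. Qed.

Lemma Linv_eq i t : (1 <= i <= N)%N ->
  Linv x N i t = x 0%nat + (t - x i.-1) / (x i - x i.-1) * (x N - x 0%nat).
Proof.
intros h. have h1 := Del_pos i h. have h2 := D_pos.
unfold Linv, a_coef, b_coef. field. lra.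
Qed.

Lemma Linv_diff i s t : (1 <= i <= N)%N ->
  Linv x N i s - Linv x N i t = (s - t) * ((x N - x 0%nat) / (x i - x i.-1)).
Proof.
intros h. rewrite (Linv_eq i s h) (Linv_eq i t h). have h1 := Del_pos i h. field. lra.
Qed.

Lemma Lmap_Linv i t : (1 <= i <= N)%N -> Lmap x N i (Linv x N i t) = t.
Proof.
intros h. have h1 := Del_pos i h. have h2 := D_pos.
unfold Lmap, Linv, a_coef, b_coef. field. lra.
Qed.

Lemma Linv_in i t : (1 <= i <= N)%N -> x i.-1 <= t <= x i -> Iint x N (Linv x N i t).
Proof.
intros h ht. rewrite (Linv_eq i t h). have h1 := Del_pos i h. have h2 := D_pos.
set r := (t - x i.-1) / (x i - x i.-1).
have r0 : 0 <= r. { unfold r. apply Rmult_le_pos; [lra|]. left; apply Rinv_0_lt_compat; lra. }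
have r1 : r <= 1.
{ unfold r. apply Rmult_le_reg_r with (x i - x i.-1); [lra|].
  unfold Rdiv. rewrite Rmult_assoc Rinv_l; lra. }
unfold Iint. split; nra.
Qed.

Lemma seg_closed i t : Iseg x N i t -> x i.-1 <= t <= x i.
Proof. unfold Iseg. case: ifP => _; lra. Qed.

Lemma seg_Iint i t : (1 <= i <= N)%N -> Iseg x N i t -> Iint x N t.
Proof.
intros h hs. have := seg_closed i t hs. have := xle 0 i.-1. have := xle i N.
unfold Iint. intros A B C. have := A ltac:(lia) ltac:(lia). have := B ltac:(lia) ltac:(lia). lra.
Qed.

Lemma cover_aux t k : (1 <= k <= N)%N -> x 0%nat <= t -> t < x k ->
  exists i, (1 <= i <= k)%N /\ x i.-1 <= t < x i.
Proof.
induction k as [|k IH]; intros hk h0 h1; [lia|].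
destruct (Nat.eq_dec k 0) as [->|hk0]; [exists 1%N; split; [lia| simpl; lra]|].
destruct (Rlt_dec t (x k)) as [hl|hl].
- destruct (IH ltac:(lia) h0 hl) as [i [hi1 hi2]]. exists i; split; [lia|exact hi2].
- exists k.+1; split; [lia|]. simpl. lra.
Qed.

Lemma cover t : Iint x N t -> exists i, (1 <= i <= N)%N /\ Iseg x N i t.
Proof.
intros [h0 h1]. unfold Iseg.
destruct (Rlt_dec t (x N.-1)) as [hl|hl].
- destruct (cover_aux t N.-1 ltac:(lia) h0 hl) as [i [hi1 hi2]].
  exists i. split; [lia|]. have -> : (i < N)%N = true by lia. exact hi2.
- exists N. split; [lia|]. rewrite ltnn. lra.
Qed.

Lemma seg_uniq i j t : (1 <= i <= N)%N -> (1 <= j <= N)%N ->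
  Iseg x N i t -> Iseg x N j t -> i = j.
Proof.
have key : forall i j, (1 <= i <= N)%N -> (1 <= j <= N)%N -> (i < j)%N ->
  Iseg x N i t -> Iseg x N j t -> False.
{ intros i0 j0 hi hj hij hsi hsj. unfold Iseg in hsi.
  have E : (i0 < N)%N = true by lia. rewrite E in hsi.
  have := seg_closed j0 t hsj. have := xle i0 j0.-1. intros A.
  have := A ltac:(lia) ltac:(lia). lra. }
intros hi hj hsi hsj.
destruct (ltngtP i j) as [h|h|h]; [exfalso; eapply key; eauto| exfalso; eapply key; eauto| exact h].
Qed.

Definition idx (t : R) : nat :=
  epsilon (inhabits 0%nat) (fun i => (1 <= i <= N)%N /\ Iseg x N i t).

Lemma idx_eq i t : (1 <= i <= N)%N -> Iseg x N i t -> idx t = i.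
Proof.
intros hi hs. unfold idx.
have := epsilon_spec (inhabits 0%nat) (fun i => (1 <= i <= N)%N /\ Iseg x N i t).
intros H. destruct (H (ex_intro _ i (conj hi hs))) as [h1 h2].
eapply seg_uniq; eauto.
Qed.

Fixpoint fn (n : nat) (t : R) : R :=
  match n with
  | O => 0
  | S m => alpha (idx t) * fn m (Linv x N (idx t) t) + q (idx t) (Linv x N (idx t) t)
  end.

Fixpoint amax (k : nat) : R :=
  match k with
  | O => 0
  | S k' => Rmax (Rabs (alpha (S k'))) (amax k')
  end.

Lemma amax_ge0 k : 0 <= amax k.
Proof. induction k; simpl; [lra|]. eapply Rle_trans; [exact IHk| apply Rmax_r]. Qed.

Lemma amax_bound k i : (1 <= i <= k)%N -> Rabs (alpha i) <= amax k.
Proof.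
induction k as [|k IH]; intros h; [lia|]. simpl.
destruct (Nat.eq_dec i k.+1) as [->|hne]; [apply Rmax_l|].
eapply Rle_trans; [apply IH; lia| apply Rmax_r].
Qed.

Lemma amax_lt1 k : (k <= N)%N -> amax k < 1.
Proof.
induction k as [|k IH]; intros h; simpl; [lra|].
apply Rmax_lub_lt; [|apply IH; lia].
have := Ha k.+1 ltac:(lia). intros [h1 h2]. unfold Rabs; destruct Rcase_abs; lra.
Qed.

Definition A := amax N.

Lemma M_ge0 : 0 <= M.
Proof. eapply Rle_trans; [apply Rabs_pos| apply (HM (x 0%nat))]. have := xle 0 N.
intros H. have := H ltac:(lia) ltac:(lia). unfold Iint. lra. Qed.

Lemma err n t : Iint x N t -> Rabs (f t - fn n t) <= A ^ n * M.
Proof.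
revert t. induction n as [|n IH]; intros t ht.
- simpl. rewrite Rminus_0_r Rmult_1_l. apply HM; exact ht.
- destruct (cover t ht) as [i [hi hs]].
  simpl. rewrite (idx_eq i t hi hs) (Hf i t hi hs).
  have hu := Linv_in i t hi (seg_closed i t hs).
  replace (alpha i * f (Linv x N i t) + q i (Linv x N i t) -
      (alpha i * fn n (Linv x N i t) + q i (Linv x N i t)))
    with (alpha i * (f (Linv x N i t) - fn n (Linv x N i t))) by ring.
  rewrite Rabs_mult Rmult_assoc. apply Rmult_le_compat; try apply Rabs_pos.
  + unfold A. apply amax_bound; lia.
  + apply IH; exact hu.
Qed.

Lemma A_ge0 : 0 <= A. Proof. apply amax_ge0. Qed.
Lemma A_lt1 : A < 1. Proof. apply amax_lt1; lia. Qed.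

Lemma fn_bound n t : Iint x N t -> Rabs (fn n t) <= 2 * M.
Proof.
intros ht. have h1 := err n t ht. have h2 := HM t ht.
have h3 : A ^ n <= 1 by (apply pow_le1; [apply A_ge0| left; apply A_lt1]).
have h4 := M_ge0. have h5 : A ^ n * M <= M by nra.
replace (fn n t) with (f t - (f t - fn n t)) by ring.
eapply Rle_trans; [apply Rabs_triang|]. rewrite Rabs_Ropp. lra.
Qed.

Fixpoint Bn (n : nat) : list R :=
  match n with
  | O => nil
  | S m => List.app (List.map x (List.seq 1 N.-1))
             (List.flat_map (fun i => List.map (Lmap x N i) (Bn m)) (List.seq 1 N))
  end.

Lemma seg_nbhd i t : (1 <= i <= N)%N -> Iseg x N i t -> ((1 < i)%N -> t <> x i.-1) ->
  exists del, 0 < del /\ forall s, Iint x N s -> Rabs (s - t) < del -> Iseg x N i s.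
Proof.
intros hi hs hne.
have hc := seg_closed i t hs.
set d1 := if (1 < i)%N then t - x i.-1 else 1.
set d2 := if (i < N)%N then x i - t else 1.
have hd1 : 0 < d1.
{ unfold d1. case: ifP => h; [|lra]. have := hne h. intros. lra. }
have hd2 : 0 < d2.
{ unfold d2. unfold Iseg in hs. case: ifP => h; [|lra]. rewrite h in hs. lra. }
exists (Rmin d1 d2). split; [apply Rmin_pos; assumption|].
intros s [hs0 hs1] hst.
have e1 : Rabs (s - t) < d1 by (eapply Rlt_le_trans; [exact hst| apply Rmin_l]).
have e2 : Rabs (s - t) < d2 by (eapply Rlt_le_trans; [exact hst| apply Rmin_r]).
have [l1 l2] : - d1 < s - t < d1 by (unfold Rabs in e1; destruct Rcase_abs in e1; lra).
have [m1 m2] : - d2 < s - t < d2 by (unfold Rabs in e2; destruct Rcase_abs in e2; lra).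
have low : x i.-1 <= s.
{ move: l1. unfold d1. case: ifP => h; [lra|]. have -> : i.-1 = 0%nat by lia. lra. }
unfold Iseg. case: ifP => h.
- split; [exact low|]. move: m2. unfold d2. rewrite h. lra.
- split; [exact low|]. have -> : i = N by lia. exact hs1.
Qed.

Lemma cont_fn n t : Iint x N t -> ~ List.In t (Bn n) ->
  continuous_within_at (Iint x N) (fn n) t.
Proof.
revert t. induction n as [|n IH]; intros t ht hnin.
- intros eps he. exists 1. split; [lra|]. intros s _ _. simpl. rewrite Rminus_diag Rabs_R0. exact he.
- destruct (cover t ht) as [i [hi hs]].
  have hne : (1 < i)%N -> t <> x i.-1.
  { intros h E. apply hnin. simpl. apply List.in_or_app. left.
    rewrite E. apply List.in_map. apply List.in_seq. lia. }
  have hu := Linv_in i t hi (seg_closed i t hs).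
  have hnu : ~ List.In (Linv x N i t) (Bn n).
  { intros hin. apply hnin. simpl. apply List.in_or_app. right.
    apply List.in_flat_map. exists i. split; [apply List.in_seq; lia|].
    rewrite -(Lmap_Linv i t hi). apply List.in_map. exact hin. }
  have IHu := IH _ hu hnu.
  destruct (seg_nbhd i t hi hs hne) as [d1 [hd1 Hd1]].
  destruct (Hq i hi) as [K HK].
  set sig := (x N - x 0%nat) / (x i - x i.-1).
  have hsig : 0 < sig.
  { unfold sig. have := D_pos. have := Del_pos i hi. intros. apply Rdiv_lt_0_compat; lra. }
  set K' := Rabs K + 1.
  have hK' : 0 < K' by (unfold K'; have := Rabs_pos K; lra).
  intros eps he.
  destruct (IHu (eps / 2) ltac:(lra)) as [d2 [hd2 Hd2]].
  have hsK : 0 < 2 * K' * sig by (apply Rmult_lt_0_compat; [lra| exact hsig]).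
  exists (Rmin d1 (Rmin (d2 / sig) (eps / (2 * K' * sig)))).
  split.
  { apply Rmin_pos; [exact hd1| apply Rmin_pos; apply Rdiv_lt_0_compat; lra]. }
  intros s hsI hst.
  have e1 : Rabs (s - t) < d1 by (eapply Rlt_le_trans; [exact hst| apply Rmin_l]).
  have e2 : Rabs (s - t) < d2 / sig.
  { eapply Rlt_le_trans; [exact hst|]. eapply Rle_trans; [apply Rmin_r| apply Rmin_l]. }
  have e3 : Rabs (s - t) < eps / (2 * K' * sig).
  { eapply Rlt_le_trans; [exact hst|]. eapply Rle_trans; [apply Rmin_r| apply Rmin_r]. }
  have hss := Hd1 s hsI e1.
  simpl. rewrite (idx_eq i s hi hss) (idx_eq i t hi hs).
  have hsu := Linv_in i s hi (seg_closed i s hss).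
  have hdiff : Rabs (Linv x N i s - Linv x N i t) = Rabs (s - t) * sig.
  { rewrite (Linv_diff i s t hi) Rabs_mult. fold sig. rewrite (Rabs_right sig); lra. }
  have f1 : Rabs (fn n (Linv x N i s) - fn n (Linv x N i t)) < eps / 2.
  { apply Hd2; [exact hsu|]. rewrite hdiff. apply lt_mul_div; assumption. }
  have f2 : Rabs (q i (Linv x N i s) - q i (Linv x N i t)) < eps / 2.
  { eapply Rle_lt_trans; [apply HK; assumption|].
    eapply Rle_lt_trans with (K' * Rabs (Linv x N i s - Linv x N i t)).
    { apply Rmult_le_compat_r; [apply Rabs_pos|]. unfold K'.
      have := Rle_abs K. lra. }
    rewrite hdiff.
    have := lt_mul_div _ _ _ hsK e3. intros. nra. }
  have f3 : Rabs (alpha i) <= 1.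
  { have := Ha i hi. intros [h1 h2]. unfold Rabs; destruct Rcase_abs; lra. }
  replace (alpha i * fn n (Linv x N i s) + q i (Linv x N i s) -
     (alpha i * fn n (Linv x N i t) + q i (Linv x N i t)))
    with (alpha i * (fn n (Linv x N i s) - fn n (Linv x N i t)) +
          (q i (Linv x N i s) - q i (Linv x N i t))) by ring.
  eapply Rle_lt_trans; [apply Rabs_triang|]. rewrite Rabs_mult.
  have := Rabs_pos (fn n (Linv x N i s) - fn n (Linv x N i t)). intros. nra.
Qed.

Lemma pow_small (y : R) : 0 < y -> exists n, A ^ n < y.
Proof.
intros hy. have hA : Rabs A < 1.
{ rewrite Rabs_right; [apply A_lt1| apply Rle_ge, A_ge0]. }
destruct (pow_lt_1_zero A hA y hy) as [n0 Hn]. exists n0.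
have := Hn n0 (le_n _). rewrite Rabs_right; [auto| apply Rle_ge, pow_le, A_ge0].
Qed.

Lemma f_cont t : Iint x N t -> (forall n, ~ List.In t (Bn n)) ->
  continuous_within_at (Iint x N) f t.
Proof.
intros ht hn eps he.
have hM := M_ge0.
destruct (pow_small (eps / (3 * (M + 1))) ltac:(apply Rdiv_lt_0_compat; lra)) as [n hAn].
have hA0 : 0 <= A ^ n by (apply pow_le, A_ge0).
have hb : A ^ n * M < eps / 3.
{ have := lt_mul_div (3 * (M+1)) _ _ ltac:(lra) hAn. intros. nra. }
destruct (cont_fn n t ht (hn n) (eps / 3) ltac:(lra)) as [d [hd Hd]].
exists d. split; [exact hd|]. intros s hs hst.
have g1 := err n s hs. have g2 := err n t ht. have g3 := Hd s hs hst.
replace (f s - f t) with ((f s - fn n s) + (fn n s - fn n t) - (f t - fn n t)) by ring.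
eapply Rle_lt_trans; [apply Rabs_triang|].
rewrite Rabs_Ropp.
eapply Rle_lt_trans; [apply Rplus_le_compat_r; apply Rabs_triang|]. lra.
Qed.

Lemma f_int : Riemann_integrable f (x 0%nat) (x N).
Proof.
have hD := D_pos. have hM := M_ge0.
apply int_approx. intros eps he.
destruct (pow_small (eps / ((M + 1) * (x N - x 0%nat))) ltac:(apply Rdiv_lt_0_compat; nra)) as [n hAn].
have hA0 : 0 <= A ^ n by (apply pow_le, A_ge0).
exists (fn n). exists (mkStepFun (StepFun_P4 (x 0%nat) (x N) (A ^ n * M))).
have hab : x 0%nat <= x N by lra.
split; [|split].
- constructor. apply int_findisc with (Bn n) (2 * M); [exact hab| |].
  + intros t ht. apply fn_bound. exact ht.
  + intros t ht hnin. apply cont_fn; [unfold Iint; lra| exact hnin].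
- intros t Ht. rewrite (Rmin_left _ _ hab) (Rmax_right _ _ hab) in Ht.
  simpl. unfold fct_cte. apply err. exact Ht.
- rewrite StepFun_P18. rewrite Rabs_right; [|apply Rle_ge; apply Rmult_le_pos; [apply Rmult_le_pos|]; lra].
  have := lt_mul_div ((M + 1) * (x N - x 0%nat)) _ _ ltac:(nra) hAn. intros. nra.
Qed.


Local Open Scope classical_set_scope.
Local Open Scope R_scope.
Lemma fin_list (l : list R) : finite_set [set t : R | List.In t l].
Proof.
elim: l => [|a l IH].
- have -> : [set t : R | List.In t nil] = set0.
  { apply/seteqP; split => t //=. }
  exact: finite_set0.
- have -> : [set t : R | List.In t (a :: l)] = [set a] `|` [set t | List.In t l].
  { apply/seteqP; split; move=> t /= [h|h]; solve [left; congruence| right; exact h]. }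
  rewrite finite_setU; split => //; exact: finite_set1.
Qed.

Lemma f_negl : (@lebesgue_measure R).-negligible (discont_set (Iint x N) f).
Proof.
set S := \bigcup_(n in [set: nat]) [set t : R | List.In t (Bn n)].
have sub : discont_set (Iint x N) f `<=` S.
{ move=> t [ht hnc]. apply: NNPP => hS. apply: hnc. apply: f_cont => //.
  move=> n hn. apply: hS. by exists n. }
eapply negligibleS; [exact sub|].
have cS : countable S.
{ apply: bigcup_countable; first exact: card_lexx.
  move=> n _. apply: finite_set_countable. exact: fin_list. }
have mS : @measurable _ (measurableTypeR R) S.
{ apply: (@countable_measurable _ (measurableTypeR R) S) => //. }
apply/negligibleP => //. exact: countable_lebesgue_measure0.
Qed.

Local Close Scope classical_set_scope.
Lemma main_sec : (@lebesgue_measure R).-negligible (discont_set (Iint x N) f) /\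
  inhabited (Riemann_integrable f (x 0%nat) (x N)).
Proof. split; [exact f_negl| constructor; exact f_int]. Qed.

End Main.

Theorem mainTheorem6 (N : nat) (x : nat -> R) (alpha : nat -> R)
  (q : nat -> R -> R) (f : R -> R) :
  (2 <= N)%N ->
  (forall i, (i < N)%N -> x i < x i.+1) ->
  (forall i, (1 <= i <= N)%N -> -1 < alpha i < 1) ->
  (forall i, (1 <= i <= N)%N -> lipschitz_on_set (Iint x N) (q i)) ->
  (exists M, forall t, Iint x N t -> Rabs (f t) <= M) ->
  (forall i t, (1 <= i <= N)%N -> Iseg x N i t ->
     f t = alpha i * f (Linv x N i t) + q i (Linv x N i t)) ->
  (@lebesgue_measure R).-negligible (discont_set (Iint x N) f) /\
  inhabited (Riemann_integrable f (x 0%nat) (x N)).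
Proof.
intros HN Hx Ha Hq [M HM] Hf.
eapply main_sec; eassumption.
Qed.
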